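(* Let $T_{ab}$ be a rank-2 tensor with symmetric part $S_{ab}=T_{(ab)}$ and antisymmetric part $F_{ab}=T_{[ab]}$. Then there is a real $f$ with $$S_{ac}S_b{}^c+F_{ac}F_b{}^c=fg_{ab},\qquad S_{ac}F_b{}^c+S_{bc}F_a{}^c=0$$ if and only if $T_a{}^b$ defines a null-cone bi-preserving map. Furthermore, in that case $S_{ab}\in\mathcal{DP}\cup-\mathcal{DP}$.
   Context: Lorentzian metric $g_{ab}$ of signature $(+,-,\dots,-)$, dimension $N\ge3$, with time orientation. $T_a{}^b$ is null-cone bi-preserving if both $k^aT_a{}^b$ and $T_a{}^bk_b$ are null or zero for every null $k$ (null: $k\ne0$, $k\cdot k=0$). $\mathcal{DP}$: rank-2 tensors $X$ with $X_{ab}u^av^b\ge0$ for all causal future-pointing $u,v$; $-\mathcal{DP}$ their negatives. *)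

(* Defs.v *)
From HB Require Import structures.
From mathcomp Require Import all_boot all_order all_algebra.
From mathcomp Require Import reals.
Set Implicit Arguments. Unset Strict Implicit. Unset Printing Implicit Defensive.
Import Order.TTheory GRing.Theory Num.Theory.
Local Open Scope ring_scope.

Section Defs.
Variable R : realType.
Variable N : nat.

Definition minkowski : 'M[R]_N :=
  \matrix_(i, j) (if i == j then (if val i == 0%N then 1 else -1) else 0).

Definition form (M : 'M[R]_N) (u v : 'cV[R]_N) : R := (u^T *m M *m v) 0 0.

Definition lorentzian (g : 'M[R]_N) : Prop :=
  exists P : 'M[R]_N, P \in unitmx /\ g = P^T *m minkowski *m P.

(* time orientation is given by a timelike vector t0 *)
Definition timelike (g : 'M[R]_N) (t : 'cV[R]_N) : Prop := 0 < form g t t.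

Definition null (g : 'M[R]_N) (k : 'cV[R]_N) : Prop :=
  k != 0 /\ form g k k = 0.

Definition causal_future (g : 'M[R]_N) (t0 u : 'cV[R]_N) : Prop :=
  u != 0 /\ 0 <= form g u u /\ 0 < form g u t0.

(* T_ab with both indices down; T_a^b = T_ac g^cb.
   k^a T_a^b is the vector g^{-1} T^T k ; T_a^b k_b is the covector T k.
   "null or zero" means the (co)vector has zero squared norm. *)
Definition ncbp (g T : 'M[R]_N) : Prop :=
  forall k : 'cV[R]_N, null g k ->
    form g (invmx g *m T^T *m k) (invmx g *m T^T *m k) = 0 /\
    form (invmx g) (T *m k) (T *m k) = 0.

Definition DP (g : 'M[R]_N) (t0 : 'cV[R]_N) (X : 'M[R]_N) : Prop :=
  forall u v, causal_future g t0 u -> causal_future g t0 v -> 0 <= form X u v.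

Definition symp (T : 'M[R]_N) : 'M[R]_N := 2^-1 *: (T + T^T).
Definition antisymp (T : 'M[R]_N) : 'M[R]_N := 2^-1 *: (T - T^T).

End Defs.

(* Main.v *)
Require Import Defs.
From HB Require Import structures.
From mathcomp Require Import all_boot all_order all_algebra.
From mathcomp Require Import reals.
From mathcomp Require Import ring lra.
From Stdlib Require Import Classical.
Import Order.TTheory GRing.Theory Num.Theory.
Local Open Scope ring_scope.

Section H.
Variable R : realType.
Variable N : nat.
Implicit Types (M A B : 'M[R]_N) (u v w x y : 'cV[R]_N).
Implicit Types (T : 'M[R]_N).

Lemma form_addl M u v w : Defs.form M (u + v) w = Defs.form M u w + Defs.form M v w.
Proof. by rewrite /Defs.form linearD /= !mulmxDl mxE. Qed.
Lemma form_addr M u v w : Defs.form M w (u + v) = Defs.form M w u + Defs.form M w v.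
Proof. by rewrite /Defs.form mulmxDr mxE. Qed.
Lemma form_scalel M a u w : Defs.form M (a *: u) w = a * Defs.form M u w.
Proof. by rewrite /Defs.form linearZ /= -!scalemxAl mxE. Qed.
Lemma form_scaler M a u w : Defs.form M w (a *: u) = a * Defs.form M w u.
Proof. by rewrite /Defs.form -scalemxAr mxE. Qed.
Lemma form_addM A B u v : Defs.form (A + B) u v = Defs.form A u v + Defs.form B u v.
Proof. by rewrite /Defs.form mulmxDr mulmxDl mxE. Qed.
Lemma form_scaleM a A u v : Defs.form (a *: A) u v = a * Defs.form A u v.
Proof. by rewrite /Defs.form -scalemxAr -scalemxAl mxE. Qed.
Lemma form_oppM A u v : Defs.form (- A) u v = - Defs.form A u v.
Proof. by rewrite -scaleN1r form_scaleM mulN1r. Qed.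
Lemma form_0l M v : Defs.form M 0 v = 0.
Proof. by rewrite /Defs.form linear0 !mul0mx mxE. Qed.
Lemma form_tr M u v : Defs.form M u v = Defs.form M^T v u.
Proof.
rewrite /Defs.form.
have -> : v^T *m M^T *m u = (u^T *m M *m v)^T by rewrite !trmx_mul trmxK mulmxA.
by rewrite [RHS]mxE.
Qed.
Lemma form_mul (C D : 'M[R]_N) M u v :
  Defs.form (C^T *m M *m D) u v = Defs.form M (C *m u) (D *m v).
Proof. by rewrite /Defs.form trmx_mul !mulmxA. Qed.
Lemma form_delta M (i j : 'I_N) :
  Defs.form M (delta_mx i 0) (delta_mx j 0) = M i j.
Proof.
rewrite /Defs.form trmx_delta -rowE -colE !mxE.
by [].
Qed.
Notation Mk := (minkowski R N).

Lemma minkE X Y : Defs.form Mk X Y =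
  \sum_i X i 0 * Y i 0 * (if val i == 0%N then 1 else -1).
Proof.
rewrite /Defs.form mxE; apply: eq_bigr => j _; rewrite mxE (bigD1 j) //=.
rewrite big1 ?addr0; last first.
  by move=> i /negbTE hij; rewrite !mxE hij mulr0.
by rewrite !mxE eqxx; case: ifP => _; ring.
Qed.

Lemma sumsq_expand (I : finType) (P : pred I) (a b : R) (X Y : I -> R) :
  \sum_(i | P i) (b * X i - a * Y i) ^+ 2 =
  b ^+ 2 * \sum_(i | P i) X i ^+ 2 + a ^+ 2 * \sum_(i | P i) Y i ^+ 2
  - 2 * a * b * \sum_(i | P i) X i * Y i.
Proof.
rewrite !mulr_sumr -!big_split -sumrB /=; apply: eq_bigr => i _; ring.
Qed.

Variable hN : (0 < N)%N.
Definition o : 'I_N := Ordinal hN.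

Lemma minkE2 X Y : Defs.form Mk X Y =
  X o 0 * Y o 0 - \sum_(i | i != o) X i 0 * Y i 0.
Proof.
rewrite minkE (bigD1 o) //= mulr1; congr (_ + _).
rewrite -sumrN; apply: eq_bigr => i hi.
have -> : (val i == 0%N) = false.
  by apply/negbTE; apply: contra hi => /eqP h; apply/eqP/val_inj.
by rewrite mulrN1.
Qed.

Lemma formXX X : Defs.form Mk X X =
  X o 0 ^+ 2 - \sum_(i | i != o) X i 0 ^+ 2.
Proof. by rewrite minkE2 expr2; congr (_ - _); apply: eq_bigr => i _; rewrite expr2. Qed.

Lemma mK0 X : 0 <= Defs.form Mk X X -> X o 0 = 0 -> X = 0.
Proof.
rewrite formXX => h ha; rewrite ha expr0n /= sub0r oppr_ge0 in h.
have hs : \sum_(i | i != o) X i 0 ^+ 2 = 0.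
  by apply/eqP; rewrite eq_le h sumr_ge0 // => i _; apply: sqr_ge0.
apply/matrixP => i j; rewrite (ord1 j) mxE.
case: (eqVneq i o) => [->//|hi].
have := psumr_eq0P (fun i _ => sqr_ge0 (X i 0)) hs hi.
by move/eqP; rewrite sqrf_eq0 => /eqP.
Qed.

Lemma key_ineq (X Y : 'cV[R]_N) :
  0 <= (Y o 0) ^+ 2 * \sum_(i | i != o) X i 0 ^+ 2
     + (X o 0) ^+ 2 * \sum_(i | i != o) Y i 0 ^+ 2
     - 2 * X o 0 * Y o 0 * \sum_(i | i != o) X i 0 * Y i 0.
Proof.
rewrite -sumsq_expand; apply: sumr_ge0 => i _; apply: sqr_ge0.
Qed.

Lemma mK1 X Y : 0 <= Defs.form Mk X X -> 0 <= Defs.form Mk Y Y ->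
  0 <= Defs.form Mk X Y * (X o 0 * Y o 0).
Proof.
rewrite !formXX minkE2 => hx hy; have hk := key_ineq X Y.
move: hx hy hk.
set a := X o 0; set b := Y o 0; set p := \sum_(i | _) X i 0 ^+ 2.
set r := \sum_(i | _) Y i 0 ^+ 2; set d := \sum_(i | _) _ * _.
move=> hx hy hk.
have h1 := mulr_ge0 (sqr_ge0 b) hx.
have h2 := mulr_ge0 (sqr_ge0 a) hy.
nra.
Qed.

Lemma mK2 X Y : 0 < Defs.form Mk X X -> 0 <= Defs.form Mk Y Y -> Y != 0 ->
  Defs.form Mk X Y != 0.
Proof.
move=> hx0 hy0 hY; apply/eqP => hxy.
have hb : Y o 0 = 0; last by move: hY; rewrite (mK0 Y hy0 hb) eqxx.
move: hx0 hy0 hxy; rewrite !formXX minkE2 => hx hy hxy; have hk := key_ineq X Y.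
move: hx hy hk hxy.
set a := X o 0; set b := Y o 0; set p := \sum_(i | _) X i 0 ^+ 2.
set r := \sum_(i | _) Y i 0 ^+ 2; set d := \sum_(i | _) _ * _.
move=> hx hy hk hxy.
have h2 := mulr_ge0 (sqr_ge0 a) hy.
have h3 : b ^+ 2 * (a ^+ 2 - p) <= 0 by nra.
have h4 : b ^+ 2 <= 0.
  by nra.
by apply/eqP; rewrite -sqrf_eq0 eq_le h4 sqr_ge0.
Qed.

Definition e (i : 'I_N) : 'cV[R]_N := delta_mx i 0.

Lemma form3 M (a b c : R) (i j k : 'I_N) :
  let X := a *: e i + b *: e j + c *: e k in
  Defs.form M X X =
    a * a * M i i + a * b * M i j + a * c * M i k
  + b * a * M j i + b * b * M j j + b * c * M j k
  + c * a * M k i + c * b * M k j + c * c * M k k.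
Proof.
rewrite /= !(form_addl, form_addr, form_scalel, form_scaler) /e !form_delta.
ring.
Qed.

Lemma e3_entry (a b c : R) (i j k l : 'I_N) :
  (a *: e i + b *: e j + c *: e k) l 0 =
  a * (l == i)%:R + b * (l == j)%:R + c * (l == k)%:R.
Proof. by rewrite !mxE /= !andbT. Qed.

Lemma MkE (i j : 'I_N) : Mk i j =
  if i == j then (if i == o then 1 else -1) else 0.
Proof.
by rewrite mxE; case: eqP.
Qed.

Lemma null_mink (Q : 'M[R]_N) : Q^T = Q ->
  (forall X, X != 0 -> Defs.form Mk X X = 0 -> Defs.form Q X X = 0) ->
  Q = Q o o *: Mk.
Proof.
move=> hQ hnull.
have sym i j : Q j i = Q i j by rewrite -[in LHS]hQ mxE.
have H3 (a b c : R) (i j k : 'I_N) : i = o -> a != 0 -> j != i -> k != i ->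
   Defs.form Mk (a *: e i + b *: e j + c *: e k)
                (a *: e i + b *: e j + c *: e k) = 0 ->
   Defs.form Q (a *: e i + b *: e j + c *: e k)
                (a *: e i + b *: e j + c *: e k) = 0.
  move=> hi ha hj hk; apply: hnull; apply/eqP => h0.
  have := congr1 (fun M : 'cV[R]_N => M i 0) h0.
  rewrite e3_entry mxE eqxx eq_sym (negbTE hj) eq_sym (negbTE hk).
  by rewrite !mulr0 !addr0 mulr1; apply/eqP.
have Hoi i : i != o -> Q o i = 0 /\ Q i i = - Q o o.
  move=> hi; have hi' : o != i by rewrite eq_sym.
  have h1 := H3 1 1 0 o i i erefl (oner_neq0 _) hi hi.
  have h2 := H3 1 (-1) 0 o i i erefl (oner_neq0 _) hi hi.
  move: h1 h2; rewrite !form3 !MkE !eqxx (negbTE hi) (negbTE hi') sym.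
  move=> h1 h2.
  have {}h1 := h1 ltac:(ring).
  have {}h2 := h2 ltac:(ring).
  split; lra.
have Hij i j : i != o -> j != o -> i != j -> Q i j = 0.
  move=> hi hj hij; have hi' : o != i by rewrite eq_sym.
  have hj' : o != j by rewrite eq_sym.
  have hji : j != i by rewrite eq_sym.
  have h1 := H3 5 3 4 o i j erefl ltac:(by rewrite pnatr_eq0) hi hj.
  move: h1; rewrite !form3 !MkE !eqxx (negbTE hi) (negbTE hi') (negbTE hj)
    (negbTE hj') (negbTE hij) (negbTE hji).
  have [h1 h2] := Hoi i hi; have [h3 h4] := Hoi j hj.
  move/(_ ltac:(ring)).
  have s1 := sym o i; have s2 := sym o j; have s3 := sym i j.
  move=> h; lra.
apply/matrixP => i j; rewrite mxE MkE.
case: (eqVneq i j) => [<-|hij].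
  case: (eqVneq i o) => [->|hi]; first by rewrite mulr1.
  by rewrite (Hoi i hi).2 mulrN1.
rewrite mulr0.
case: (eqVneq i o) => [hio|hi].
  by rewrite hio; apply: (Hoi j _).1; rewrite eq_sym -hio.
case: (eqVneq j o) => [hjo|hj].
  by rewrite -sym hjo; apply: (Hoi i hi).1.
exact: Hij.
Qed.

Lemma Mk_sym : Mk^T = Mk.
Proof. by apply/matrixP => i j; rewrite !mxE eq_sym; case: eqP => // ->. Qed.

Lemma Mk_sq : Mk *m Mk = 1%:M.
Proof.
apply/matrixP => i j; rewrite !mxE (bigD1 i) //= big1 ?addr0.
  rewrite !MkE eqxx; case: (eqVneq i j) => [->|]; last by rewrite mulr0.
  by case: ifP => _; rewrite ?mulr1 ?mulrNN ?mulr1.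
by move=> k hk; rewrite MkE eq_sym (negbTE hk) mul0r.
Qed.

Lemma Mk_unit : Mk \in unitmx.
Proof. exact: (mulmx1_unit Mk_sq).1. Qed.

Variable P : 'M[R]_N.
Hypothesis hP : P \in unitmx.
Variable g : 'M[R]_N.
Hypothesis hgP : g = P^T *m Mk *m P.

Lemma g_sym : g^T = g.
Proof. by rewrite hgP !trmx_mul trmxK Mk_sym mulmxA. Qed.

Lemma g_unit : g \in unitmx.
Proof. by rewrite hgP !unitmx_mul unitmx_tr hP Mk_unit. Qed.

Lemma Gi_sym : (invmx g)^T = invmx g.
Proof. by rewrite trmx_inv g_sym. Qed.

Lemma formgP x y : Defs.form g x y = Defs.form Mk (P *m x) (P *m y).
Proof. by rewrite hgP form_mul. Qed.

Lemma Px0 x : P *m x = 0 -> x = 0.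
Proof. by move=> h; rewrite -(mulKmx hP x) h mulmx0. Qed.

Lemma null_g (Q : 'M[R]_N) : Q^T = Q ->
  (forall k, null g k -> Defs.form Q k k = 0) -> exists f, Q = f *: g.
Proof.
move=> hQ hn.
set Pi := invmx P; set Q' := Pi^T *m Q *m Pi.
have hQ' : Q'^T = Q' by rewrite /Q' !trmx_mul trmxK hQ mulmxA.
have hn' X : X != 0 -> Defs.form Mk X X = 0 -> Defs.form Q' X X = 0.
  move=> hX h0; rewrite /Q' form_mul; apply: hn; split.
    by apply: contra hX => /eqP h; rewrite -(mulKVmx hP X) -/Pi h mulmx0.
  by rewrite formgP /Pi mulKVmx.
exists (Q' o o); have hQQ := null_mink Q' hQ' hn'.
have -> : Q = P^T *m Q' *m P.
  by rewrite /Q' !mulmxA -trmx_mul mulVmx // trmx1 mul1mx -mulmxA mulVmx // mulmx1.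
by rewrite [X in P^T *m X *m P]hQQ -scalemxAr -scalemxAl hgP.
Qed.

Notation Gi := (invmx g).
Definition Am (T : 'M[R]_N) := T^T *m Gi *m T.
Definition Bm (T : 'M[R]_N) := T *m Gi *m T^T.

Lemma Am_sym T : (Am T)^T = Am T.
Proof. by rewrite /Am !trmx_mul trmxK Gi_sym mulmxA. Qed.
Lemma Bm_sym T : (Bm T)^T = Bm T.
Proof. by rewrite /Bm !trmx_mul trmxK Gi_sym mulmxA. Qed.

Lemma formA T k : Defs.form Gi (T *m k) (T *m k) = Defs.form (Am T) k k.
Proof. by rewrite /Am form_mul. Qed.

Lemma formB T k : Defs.form g (Gi *m T^T *m k) (Gi *m T^T *m k) =
   Defs.form (Bm T) k k.
Proof.
rewrite -form_mul /Bm; congr Defs.form.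
rewrite trmx_mul trmxK Gi_sym -!mulmxA; congr (_ *m _).
by rewrite !mulmxA mulVmx ?g_unit // mul1mx.
Qed.

Lemma ncbp_AB T : ncbp g T <->
  (forall k, null g k -> Defs.form (Am T) k k = 0 /\ Defs.form (Bm T) k k = 0).
Proof.
rewrite /ncbp; split => h k hk; have [h1 h2] := h k hk.
  by rewrite -formA -formB.
by rewrite formA formB.
Qed.

Lemma trace_eq T f1 f2 : Am T = f1 *: g -> Bm T = f2 *: g -> f1 = f2.
Proof.
move=> hA hB.
have ht : \tr (Am T *m Gi) = \tr (Bm T *m Gi).
  rewrite /Am /Bm -(mulmxA (T^T *m Gi)) mxtrace_mulC.
  by rewrite !mulmxA.
move: ht; rewrite hA hB -!scalemxAl mulmxV ?g_unit // !mxtraceZ mxtrace1.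
move/mulIf; apply; rewrite pnatr_eq0 -lt0n; exact: hN.
Qed.

Lemma sympE T : symp T = 2^-1 *: T + 2^-1 *: T^T.
Proof. by rewrite /symp scalerDr. Qed.
Lemma sympTE T : (symp T)^T = 2^-1 *: T^T + 2^-1 *: T.
Proof. by rewrite /symp linearZ /= linearD /= trmxK scalerDr. Qed.
Lemma asympE T : antisymp T = 2^-1 *: T - 2^-1 *: T^T.
Proof. by rewrite /antisymp scalerBr. Qed.
Lemma asympTE T : (antisymp T)^T = 2^-1 *: T^T - 2^-1 *: T.
Proof. by rewrite /antisymp linearZ /= linearB /= trmxK scalerBr. Qed.

Lemma SF_id1 T :
  symp T *m Gi *m (symp T)^T + antisymp T *m Gi *m (antisymp T)^T =
  2^-1 *: (Am T + Bm T).
Proof.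
rewrite sympTE asympTE sympE asympE /Am /Bm.
rewrite !(mulmxDl, mulmxDr, mulmxBl, mulmxBr, mulNmx, mulmxN) -!(scalemxAl, scalemxAr).
apply/matrixP => i j; rewrite !mxE; by field.
Qed.

Lemma SF_id2 T :
  symp T *m Gi *m (antisymp T)^T + antisymp T *m Gi *m (symp T)^T =
  2^-1 *: (Bm T - Am T).
Proof.
rewrite sympTE asympTE sympE asympE /Am /Bm.
rewrite !(mulmxDl, mulmxDr, mulmxBl, mulmxBr, mulNmx, mulmxN) -!(scalemxAl, scalemxAr).
apply/matrixP => i j; rewrite !mxE; by field.
Qed.

Lemma part1 T :
  (exists f : R,
      symp T *m Gi *m (symp T)^T + antisymp T *m Gi *m (antisymp T)^T = f *: g /\
      symp T *m Gi *m (antisymp T)^T + antisymp T *m Gi *m (symp T)^T = 0)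
  <-> ncbp g T.
Proof.
rewrite ncbp_AB SF_id1 SF_id2; split.
  move=> [f [h1 h2]] k [hk0 hk].
  have eA : Am T = 2^-1 *: (Am T + Bm T) - 2^-1 *: (Bm T - Am T).
    by apply/matrixP => i j; rewrite !mxE; by field.
  have eB : Bm T = 2^-1 *: (Am T + Bm T) + 2^-1 *: (Bm T - Am T).
    by apply/matrixP => i j; rewrite !mxE; by field.
  split; first by rewrite eA h1 h2 subr0 form_scaleM hk mulr0.
  by rewrite eB h1 h2 addr0 form_scaleM hk mulr0.
move=> h.
have [f1 hA] := null_g (Am T) (Am_sym T) (fun k hk => (h k hk).1).
have [f2 hB] := null_g (Bm T) (Bm_sym T) (fun k hk => (h k hk).2).
have e12 := trace_eq T f1 f2 hA hB; subst f2.
exists f1; rewrite hA hB subrr scaler0; split => //.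
by apply/matrixP => i j; rewrite !mxE; by field.
Qed.

Lemma form_0r M u : Defs.form M u 0 = 0.
Proof. by rewrite /Defs.form mulmx0 mxE. Qed.

Variable t0 : 'cV[R]_N.
Hypothesis ht0 : timelike g t0.

Definition cc x := (P *m x) o 0.

Lemma L_sign {x y} : 0 <= Defs.form g x x -> 0 <= Defs.form g y y ->
  0 <= Defs.form g x y * (cc x * cc y).
Proof. rewrite !formgP; exact: mK1. Qed.

Lemma L_zero {x} : 0 <= Defs.form g x x -> cc x = 0 -> x = 0.
Proof. by rewrite formgP => h1 h2; apply: Px0; apply: mK0. Qed.


Lemma L_str {x y} : 0 < Defs.form g x x -> 0 <= Defs.form g y y -> y != 0 ->
  Defs.form g x y != 0.
Proof.
rewrite !formgP => h1 h2 hy; apply: mK2 => //.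
by apply: contra hy => /eqP h; apply/eqP; apply: Px0.
Qed.

Lemma t0_neq0 : t0 != 0.
Proof. by apply: contraTneq ht0 => ->; rewrite /timelike form_0l ltxx. Qed.

Lemma ct0_neq0 : cc t0 != 0.
Proof.
by apply: contra t0_neq0 => /eqP h; apply/eqP; apply: L_zero (ltW ht0) h.
Qed.

Lemma fc_pos {u} : causal_future g t0 u -> 0 < cc u * cc t0.
Proof.
move=> [hu0 [hu hut]].
have h := L_sign hu (ltW ht0).
have hcu : cc u != 0.
  by apply: contra hu0 => /eqP h0; apply/eqP; apply: L_zero hu h0.
have hne : cc u * cc t0 != 0 by rewrite mulf_neq0 // ct0_neq0.
rewrite lt_def hne /=.
by rewrite -(pmulr_rge0 _ hut).
Qed.

Lemma sq_div (a s : R) : 0 <= a * s ^+ 2 -> s != 0 -> 0 <= a.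
Proof.
move=> h hs; have hs2 : 0 < s ^+ 2 by rewrite exprn_even_gt0.
nra.
Qed.

Lemma sameside {u u' x} : causal_future g t0 u -> causal_future g t0 u' ->
  0 <= Defs.form g x x -> 0 <= Defs.form g u x * Defs.form g u' x.
Proof.
move=> hu hu' hx.
have [hcx|hcx] := eqVneq (cc x) 0.
  by rewrite (L_zero hx hcx) !form_0r mulr0.
have h1 := L_sign hu.2.1 hx; have h2 := L_sign hu'.2.1 hx.
have h3 := fc_pos hu; have h4 := fc_pos hu'.
have H := mulr_ge0 (mulr_ge0 h1 h2) (mulr_ge0 (ltW h3) (ltW h4)).
apply: (@sq_div _ (cc u * cc u' * cc x * cc t0)).
  by move: H; congr (_ <= _); ring.
rewrite !mulf_neq0 // ?ct0_neq0 //.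
  by move: h3; rewrite lt_def mulf_eq0 negb_or => /andP[/andP[]].
by move: h4; rewrite lt_def mulf_eq0 negb_or => /andP[/andP[]].
Qed.

Lemma qL T u v : Defs.form T u v = Defs.form g u (Gi *m T *m v).
Proof.
by rewrite /Defs.form !mulmxA -(mulmxA (u^T) g) mulmxV ?g_unit // mulmx1.
Qed.

Lemma qL' T u v : Defs.form T u v = Defs.form g v (Gi *m T^T *m u).
Proof. by rewrite form_tr qL. Qed.

Lemma LL T u v :
  Defs.form g (Gi *m T *m u) (Gi *m T *m v) = Defs.form (Am T) u v.
Proof.
rewrite -form_mul /Am; congr Defs.form.
rewrite trmx_mul Gi_sym -!mulmxA; congr (_ *m _).
by rewrite !mulmxA mulVmx ?g_unit // mul1mx.
Qed.

Lemma formS T u v :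
  Defs.form (symp T) u v = 2^-1 * (Defs.form T u v + Defs.form T v u).
Proof.
by rewrite /symp form_scaleM form_addM [Defs.form T^T _ _]form_tr trmxK.
Qed.

Lemma f_ge0 (hN3 : (2 < N)%N) T f : Am T = f *: g -> 0 <= f.
Proof.
move=> hA; rewrite leNgt; apply/negP => hf.
have h1N : (1 < N)%N by apply: ltn_trans hN3.
pose i1 : 'I_N := Ordinal h1N; pose i2 : 'I_N := Ordinal hN3.
pose e1 := invmx P *m e i1; pose e2 := invmx P *m e i2.
have hg (i j : 'I_N) : Defs.form g (invmx P *m e i) (invmx P *m e j) = Mk i j.
  by rewrite formgP !mulKVmx // form_delta.
have n1 : i1 != o by []. have n2 : i2 != o by []. have n12 : i1 != i2 by [].
pose x := Gi *m T *m e1; pose y := Gi *m T *m e2.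
have hx : 0 < Defs.form g x x.
  by rewrite /x LL hA form_scaleM hg MkE eqxx (negbTE n1) mulrN1 oppr_gt0.
have hy : 0 < Defs.form g y y.
  by rewrite /y LL hA form_scaleM hg MkE eqxx (negbTE n2) mulrN1 oppr_gt0.
have hxy : Defs.form g x y = 0.
  by rewrite /x /y LL hA form_scaleM hg MkE (negbTE n12) mulr0.
have hy0 : y != 0.
  by apply: contraTneq hy => ->; rewrite form_0l ltxx.
by move: (L_str hx (ltW hy) hy0); rewrite hxy eqxx.
Qed.

Lemma fc_t0 : causal_future g t0 t0.
Proof.
split; first exact: t0_neq0.
split; first exact: ltW ht0.
exact: ht0.
Qed.

Lemma part2 (hN3 : (2 < N)%N) T f : Am T = f *: g -> Bm T = f *: g ->
  DP g t0 (symp T) \/ DP g t0 (- symp T).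
Proof.
move=> hA hB; have hf := f_ge0 hN3 T f hA.
pose q u v := Defs.form T u v.
pose fc := causal_future g t0.
have hi u u' v : fc u -> fc u' -> fc v -> 0 <= q u v * q u' v.
  move=> hu hu' hv; rewrite /q (qL T u v) (qL T u' v); apply: sameside => //.
  by rewrite LL hA form_scaleM; apply: mulr_ge0 => //; case: hv => _ [].
have hii u v v' : fc u -> fc v -> fc v' -> 0 <= q u v * q u v'.
  move=> hu hv hv'; rewrite /q (qL' T u v) (qL' T u v'); apply: sameside => //.
  by rewrite formB hB form_scaleM; apply: mulr_ge0 => //; case: hu => _ [].
have hiii u v : fc u -> fc v -> q u v != 0 -> q t0 v != 0.
  move=> hu hv; rewrite /q (qL T u v) (qL T t0 v).
  have [->|hx] := eqVneq (Gi *m T *m v) 0; first by rewrite form_0r eqxx.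
  move=> _; apply: L_str => //.
  by rewrite LL hA form_scaleM; apply: mulr_ge0 => //; case: hv => _ [].
have hq u v w z : fc u -> fc v -> fc w -> fc z -> 0 <= q u v * q w z.
  move=> hu hv hw hz.
  have [->|h1] := eqVneq (q u v) 0; first by rewrite mul0r.
  have [->|h2] := eqVneq (q w z) 0; first by rewrite mulr0.
  have a0 := hiii _ _ hu hv h1; have b0 := hiii _ _ hw hz h2.
  have k1 := hi _ _ _ fc_t0 hu hv; have k2 := hi _ _ _ fc_t0 hw hz.
  have k3 := hii _ _ _ fc_t0 hv hz.
  have H := mulr_ge0 (mulr_ge0 k1 k2) k3.
  apply: (@sq_div _ (q t0 v * q t0 z)); last by rewrite mulf_neq0.
  by move: H; congr (_ <= _); ring.
have hS u v w z : fc u -> fc v -> fc w -> fc z ->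
    0 <= Defs.form (symp T) u v * Defs.form (symp T) w z.
  move=> hu hv hw hz; rewrite !formS.
  have := hq _ _ _ _ hu hv hw hz; have := hq _ _ _ _ hu hv hz hw.
  have := hq _ _ _ _ hv hu hw hz; have := hq _ _ _ _ hv hu hz hw.
  rewrite /q => c1 c2 c3 c4.
  set a := Defs.form T u v; set b := Defs.form T v u.
  set c := Defs.form T w z; set d := Defs.form T z w.
  have -> : 2^-1 * (a + b) * (2^-1 * (c + d)) =
    (2^-1 * 2^-1) * ((a * c + a * d) + (b * c + b * d)) by ring.
  by apply: mulr_ge0; [apply: mulr_ge0; rewrite invr_ge0 ler0n|
    rewrite !addr_ge0].
case: (classic (exists u v, fc u /\ fc v /\ Defs.form (symp T) u v < 0)).
  move=> [u [v [hu [hv hneg]]]]; right => w z hw hz.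
  rewrite form_oppM oppr_ge0; have := hS _ _ _ _ hu hv hw hz.
  by rewrite nmulr_rge0.
move=> hno; left => w z hw hz; rewrite leNgt; apply/negP => h.
by apply: hno; exists w, z.
Qed.
End H.

Theorem mainTheorem12 (R : realType) (N : nat) (hN : (3 <= N)%N)
  (g : 'M[R]_N) (t0 : 'cV[R]_N) (hg : lorentzian g) (ht0 : timelike g t0)
  (T : 'M[R]_N) :
  let S := symp T in
  let F := antisymp T in
  ((exists f : R,
      S *m invmx g *m S^T + F *m invmx g *m F^T = f *: g /\
      S *m invmx g *m F^T + F *m invmx g *m S^T = 0)
   <-> ncbp g T)
  /\ (ncbp g T -> DP g t0 S \/ DP g t0 (- S)).
Proof.
move=> S F.
have [P [hP hgP]] := hg.
have hN0 : (0 < N)%N by apply: leq_trans hN.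
have hN3 : (2 < N)%N by [].
split; first exact: (part1 R N hN0 P hP g hgP T).
move=> hn.
have h := (ncbp_AB R N hN0 P hP g hgP T).1 hn.
have [f1 hA] := null_g R N hN0 P hP g hgP _ (Am_sym R N P g hgP T)
  (fun k hk => (h k hk).1).
have [f2 hB] := null_g R N hN0 P hP g hgP _ (Bm_sym R N P g hgP T)
  (fun k hk => (h k hk).2).
have e12 := trace_eq R N hN0 P hP g hgP T f1 f2 hA hB; subst f2.
exact: (part2 R N hN0 P hP g hgP t0 ht0 hN3 T f1 hA hB).
Qed.
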